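(* Let $\mathfrak{S}=(\mathcal{X},\mathsf{S},\gamma,(\Lambda_{a})_{a\in\mathcal{A}})$ be a spectral decomposition system for the Euclidean space $\mathfrak{H}$ with spectral-induced ordering mapping $\tau$, and let $x,y\in\mathcal{X}$. Then the following are equivalent: (i) $y\in\operatorname{conv}(\mathsf{S}\cdot x)$; (ii) $\langle y,z\rangle\leq\langle\tau(x),\tau(z)\rangle$ for every $z\in\mathcal{X}$. Moreover, if $x$ and $y$ both lie in the range of $\gamma$, then each of (i) and (ii) is equivalent to (iii) $\langle y-x,z\rangle\leq 0$ for every $z$ in the range of $\gamma$.
   Context: A Euclidean space is a finite-dimensional real inner product space; inner products are written $\langle\cdot,\cdot\rangle$ and norms $\|\cdot\|$. Let $\mathfrak{H}$ and $\mathcal{X}$ be Euclidean spaces, let $\mathsf{S}$ be a group acting on $\mathcal{X}$ by linear isometries, let $\gamma\colon\mathfrak{H}\to\mathcal{X}$, and let $(\Lambda_a)_{a\in\mathcal{A}}$ be a family of linear operators from $\mathcal{X}$ to $\mathfrak{H}$. The orbit of $x$ is $\mathsf{S}\cdot x=\{s\cdot x: s\in\mathsf{S}\}$; a map $f$ on $\mathcal{X}$ is $\mathsf{S}$-invariant if $f(s\cdot x)=f(x)$ for all $s,x$. The tuple is a spectral decomposition system for $\mathfrak{H}$ if: [A] every $\Lambda_a$ is an isometry; [B] there exists an $\mathsf{S}$-invariant $\tau\colon\mathcal{X}\to\mathcal{X}$ with $\tau(x)\in\mathsf{S}\cdot x$ for all $x$ and $\gamma\circ\Lambda_a=\tau$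 for all $a$; [C] for every $X\in\mathfrak{H}$ there is $a$ with $X=\Lambda_a\gamma(X)$; [D] $\langle X,Y\rangle\leq\langle\gamma(X),\gamma(Y)\rangle$ for all $X,Y\in\mathfrak{H}$. The map $\tau$ in [B] is the spectral-induced ordering mapping. $\operatorname{conv}$ denotes convex hull. *)

(* Defs.v *)
From HB Require Import structures.
From mathcomp Require Import all_boot all_order all_algebra.
From mathcomp Require Import reals.
Set Implicit Arguments. Unset Strict Implicit. Unset Printing Implicit Defensive.
Import Order.TTheory GRing.Theory Num.Theory.
Local Open Scope ring_scope.

Section Defs.
Variable R : realType.

(** Together with
    [V : vectType R] (finite dimension) this makes [(V, ip)] a Euclidean space. *)
Definition inner_product (V : lmodType R) (ip : V -> V -> R) : Prop :=
  [/\ forall u v, ip u v = ip v u,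
      forall a u v w, ip (a *: u + v) w = a * ip u w + ip v w,
      forall u, 0 <= ip u u
    & forall u, ip u u = 0 -> u = 0].

Definition ipnorm (V : lmodType R) (ip : V -> V -> R) (u : V) : R :=
  Num.sqrt (ip u u).

Definition is_linear_map (U V : lmodType R) (f : U -> V) : Prop :=
  forall a u v, f (a *: u + v) = a *: f u + f v.

Definition linear_isometry (U V : lmodType R) (ipU : U -> U -> R)
    (ipV : V -> V -> R) (f : U -> V) : Prop :=
  is_linear_map f /\ forall u, ipnorm ipV (f u) = ipnorm ipU u.

Definition is_group (G : Type) (mul : G -> G -> G) (inv : G -> G) (e : G) : Prop :=
  [/\ forall g h k, mul g (mul h k) = mul (mul g h) k,
      forall g, mul e g = g /\ mul g e = g
    & forall g, mul (inv g) g = e /\ mul g (inv g) = e].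

Definition isometric_action (G : Type) (mul : G -> G -> G) (e : G)
    (X : lmodType R) (ipX : X -> X -> R) (act : G -> X -> X) : Prop :=
  [/\ forall x, act e x = x,
      forall g h x, act (mul g h) x = act g (act h x)
    & forall g, linear_isometry ipX ipX (act g)].

Definition orbitS (G X : Type) (act : G -> X -> X) (x : X) : X -> Prop :=
  fun y => exists g, y = act g x.

Definition S_invariant (G X Y : Type) (act : G -> X -> X) (f : X -> Y) : Prop :=
  forall g x, f (act g x) = f x.

Definition conv (V : lmodType R) (A : V -> Prop) : V -> Prop :=
  fun y => exists (n : nat) (w : 'I_n -> R) (p : 'I_n -> V),
    [/\ forall i, 0 <= w i, \sum_(i < n) w i = 1, forall i, A (p i)
      & y = \sum_(i < n) w i *: p i].

Definition in_range (U V : Type) (f : U -> V) (v : V) : Prop :=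
  exists u, v = f u.

(** [(X, S, gamma, (Lambda_a)_a)] is a spectral decomposition system for the
    Euclidean space [(H, ipH)] whose spectral-induced ordering mapping is [tau]
    (conditions [A]-[D]; condition [B] is stated with the witness [tau]). *)
Definition spectral_decomposition_system_with
    (H : vectType R) (ipH : H -> H -> R)
    (X : vectType R) (ipX : X -> X -> R)
    (G : Type) (act : G -> X -> X)
    (gamma : H -> X) (Aidx : Type) (Lambda : Aidx -> X -> H)
    (tau : X -> X) : Prop :=
  [/\ (* [A] *) forall a, linear_isometry ipX ipH (Lambda a),
      (* [B] *) [/\ S_invariant act tau,
                    forall x, orbitS act x (tau x)
                  & forall a x, gamma (Lambda a x) = tau x],
      (* [C] *) forall Y : H, exists a, Y = Lambda a (gamma Y)
    & (* [D] *) forall Y Z : H, ipH Y Z <= ipX (gamma Y) (gamma Z)].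

Definition spectral_decomposition_system
    (H : vectType R) (ipH : H -> H -> R)
    (X : vectType R) (ipX : X -> X -> R)
    (G : Type) (act : G -> X -> X)
    (gamma : H -> X) (Aidx : Type) (Lambda : Aidx -> X -> H) : Prop :=
  exists tau, spectral_decomposition_system_with ipH ipX act gamma Lambda tau.

End Defs.

(* Main.v *)
From HB Require Import structures.
From mathcomp Require Import all_boot all_order all_algebra.
From mathcomp Require Import all_classical all_reals topology normedtype derive.
From mathcomp Require Import ring lra.
Require Import Defs.
Import Order.TTheory GRing.Theory Num.Theory.
Import VectorInternalTheory.
Import numFieldTopology.Exports numFieldNormedType.Exports.
Set Implicit Arguments. Unset Strict Implicit. Unset Printing Implicit Defensive.
Local Open Scope ring_scope.
Lemma ip0l (R : realType) (V : lmodType R) (ip : V -> V -> R) (h : inner_product ip) w :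
  ip 0 w = 0.
Proof.
case: h => _ hl _ _; have := hl 1 0 0 w; rewrite scale1r addr0 mul1r.
by move/(congr1 (fun t => t - ip 0 w)); rewrite subrr addrK => <-.
Qed.

Lemma ipDl (R : realType) (V : lmodType R) (ip : V -> V -> R) (h : inner_product ip) u v w :
  ip (u + v) w = ip u w + ip v w.
Proof. by case: (h) => _ hl _ _; rewrite -[u]scale1r hl mul1r scale1r. Qed.

Lemma ipZl (R : realType) (V : lmodType R) (ip : V -> V -> R) (h : inner_product ip) a u w :
  ip (a *: u) w = a * ip u w.
Proof. by case: (h) => _ hl _ _; rewrite -[a *: u]addr0 hl (ip0l h) addr0. Qed.

Lemma ipNl (R : realType) (V : lmodType R) (ip : V -> V -> R) (h : inner_product ip) u w :
  ip (- u) w = - ip u w.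
Proof. by rewrite -scaleN1r (ipZl h) mulN1r. Qed.

Lemma ipBl (R : realType) (V : lmodType R) (ip : V -> V -> R) (h : inner_product ip) u v w :
  ip (u - v) w = ip u w - ip v w.
Proof. by rewrite (ipDl h) (ipNl h). Qed.

Lemma ipC (R : realType) (V : lmodType R) (ip : V -> V -> R) (h : inner_product ip) u v :
  ip u v = ip v u.
Proof. by case: h. Qed.

Lemma ipDr (R : realType) (V : lmodType R) (ip : V -> V -> R) (h : inner_product ip) u v w :
  ip w (u + v) = ip w u + ip w v.
Proof. by rewrite !(ipC h w) (ipDl h). Qed.

Lemma ipZr (R : realType) (V : lmodType R) (ip : V -> V -> R) (h : inner_product ip) a u w :
  ip w (a *: u) = a * ip w u.
Proof. by rewrite !(ipC h w) (ipZl h). Qed.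

Lemma ipBr (R : realType) (V : lmodType R) (ip : V -> V -> R) (h : inner_product ip) u v w :
  ip w (u - v) = ip w u - ip w v.
Proof. by rewrite !(ipC h w) (ipBl h). Qed.

Lemma ip_suml (R : realType) (V : lmodType R) (ip : V -> V -> R) (h : inner_product ip)
  (I : Type) (r : seq I) (P : pred I) (F : I -> V) w :
  ip (\sum_(i <- r | P i) F i) w = \sum_(i <- r | P i) ip (F i) w.
Proof.
by apply: (big_morph (fun u => ip u w)) => [u v|]; [exact: ipDl | exact: ip0l].
Qed.

Lemma ip_ge0 (R : realType) (V : lmodType R) (ip : V -> V -> R) (h : inner_product ip) u :
  0 <= ip u u.
Proof. by case: h. Qed.

Lemma ip_eq0 (R : realType) (V : lmodType R) (ip : V -> V -> R) (h : inner_product ip) u :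
  ip u u = 0 -> u = 0.
Proof. by case: h => _ _ _; apply. Qed.

Lemma lin_iso_ip (R : realType) (U V : lmodType R) (ipU : U -> U -> R) (ipV : V -> V -> R)
  (hU : inner_product ipU) (hV : inner_product ipV) (f : U -> V) :
  linear_isometry ipU ipV f -> forall u v, ipV (f u) (f v) = ipU u v.
Proof.
move=> [hlin hn].
have fD u v : f (u + v) = f u + f v by rewrite -[u]scale1r hlin !scale1r.
have sq u : ipV (f u) (f u) = ipU u u.
  have := hn u; rewrite /ipnorm => e.
  by rewrite -(sqr_sqrtr (ip_ge0 hV (f u))) -(sqr_sqrtr (ip_ge0 hU u)) e.
move=> u v; have := sq (u + v).
rewrite fD !(ipDl hV) !(ipDr hV) !(ipDl hU) !(ipDr hU) !sq (ipC hV (f v)) (ipC hU v).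
lra.
Qed.
Lemma exists_nz_coord (R : realType) m n (M : 'M[R]_(m, n)) :
  M != 0 -> exists i, exists j, M i j != 0.
Proof.
move=> nz; apply/not_existsP => h; move/eqP: nz; apply; apply/matrixP => i j.
rewrite mxE; apply/eqP/negPn/negP => hij; apply: (h i); exists j; exact: hij.
Qed.

Lemma carath (R : realType) n (A : 'rV[R]_n -> Prop) (w : 'I_n.+2 -> R)
  (p : 'I_n.+2 -> 'rV[R]_n) :
  (forall i, 0 <= w i) -> \sum_i w i = 1 -> (forall i, A (p i)) ->
  exists (w' : 'I_n.+1 -> R) (p' : 'I_n.+1 -> 'rV[R]_n),
  [/\ forall i, 0 <= w' i, \sum_i w' i = 1, forall i, A (p' i)
    & \sum_i w' i *: p' i = \sum_i w i *: p i].
Proof.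
move=> w0 wsum hA.
pose D : 'M[R]_(n.+1, n) := \matrix_(k, j) (p (lift ord0 k) - p ord0) 0 j.
have nf : ~~ row_free D.
  by apply/negP => /eqP h; have := rank_leq_col D; rewrite h ltnn.
have : kermx D != 0 by rewrite kermx_eq0.
move=> /exists_nz_coord [i0 [k0 hk0]].
pose c := row i0 (kermx D).
have hc0 : c *m D = 0 by rewrite /c -row_mul mulmx_ker row0.
have hcsum : \sum_k c 0 k *: (p (lift ord0 k) - p ord0) = 0.
  apply: (etrans _ hc0); rewrite mulmx_sum_row; apply: eq_bigr => k _; congr (_ *: _).
  by apply/rowP => j; rewrite !mxE.
pose e (i : 'I_n.+2) := if unlift ord0 i is Some k then c 0 k else - \sum_k c 0 k.
have eL k : e (lift ord0 k) = c 0 k by rewrite /e liftK.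
have e0 : e ord0 = - \sum_k c 0 k by rewrite /e unlift_none.
have esum : \sum_i e i = 0.
  rewrite big_ord_recl e0.
  have -> : \sum_(i < n.+1) e (lift ord0 i) = \sum_(i < n.+1) c 0 i.
    by apply: eq_bigr => k _; exact: eL.
  by rewrite addNr.
have epsum : \sum_i e i *: p i = 0.
  rewrite big_ord_recl e0.
  have -> : \sum_(i < n.+1) e (lift ord0 i) *: p (lift ord0 i) = \sum_(i < n.+1) c 0 i *: p (lift ord0 i).
    by apply: eq_bigr => k _; rewrite (eL k).
  rewrite -[RHS]hcsum.
  have -> : \sum_k c 0 k *: (p (lift ord0 k) - p ord0) = \sum_k c 0 k *: p (lift ord0 k) - \sum_k c 0 k *: p ord0.
    by rewrite -sumrB; apply: eq_bigr => k _; rewrite scalerBr.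
  by rewrite -scaler_suml scaleNr addrC.
have [j0 hj0] : exists j, 0 < e j.
  apply/not_existsP => h.
  have hle i : 0 <= - e i by rewrite oppr_ge0; rewrite leNgt; apply/negP => hi; apply: (h i).
  have := @psumr_eq0P _ _ xpredT (fun i => - e i) (fun i _ => hle i).
  rewrite sumrN esum oppr0 => /(_ erefl (lift ord0 k0) erefl).
  by rewrite eL => /eqP; rewrite oppr_eq0 mxE (negbTE hk0).
case: (@arg_minP _ R _ j0 (fun i => 0 < e i) (fun i => w i / e i) hj0).
move=> j hj hmin.
pose t := w j / e j.
have t0 : 0 <= t by rewrite /t divr_ge0 // ltW.
pose w1 i := w i - t * e i.
have w10 i : 0 <= w1 i.
  rewrite /w1 subr_ge0; have [ei|ei] := ltP 0 (e i).
    by have := hmin i ei; rewrite ler_pdivlMr.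
  by apply: (le_trans _ (w0 i)); rewrite mulr_ge0_le0.
have w1j : w1 j = 0 by rewrite /w1 /t divfK ?subrr // gt_eqF.
have w1sum : \sum_i w1 i = 1.
  by rewrite /w1 sumrB -mulr_sumr esum mulr0 subr0.
have w1psum : \sum_i w1 i *: p i = \sum_i w i *: p i.
  under eq_bigr do rewrite /w1 scalerBl -scalerA.
  by rewrite sumrB -scaler_sumr epsum scaler0 subr0.
exists (fun k => w1 (lift j k)), (fun k => p (lift j k)); split => //.
  by rewrite -w1sum [RHS](bigD1_ord j) //= w1j add0r.
by rewrite -w1psum [RHS](bigD1_ord j) //= w1j scale0r add0r.
Qed.
Local Open Scope classical_set_scope.

Lemma fst_cont (T U : topologicalType) : continuous (@fst T U).
Proof. by move=> q; apply: cvg_fst. Qed.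

Lemma snd_cont (T U : topologicalType) : continuous (@snd T U).
Proof. by move=> q; apply: cvg_snd. Qed.

Lemma mxcoord_cont (T : puniformType) m n (i : 'I_m) (j : 'I_n) :
  continuous (fun M : 'M[T]_(m, n) => M i j).
Proof.
move=> M; apply/(@cvg_entourageP T ((fun M : 'M[T]_(m, n) => M i j) @ M) (fmap_filter _ (nbhs_filter M)) (M i j)) => A entA.
have h := (iffLR (@cvg_mx_entourageP T m n (nbhs M) _ M)) (@cvg_id _ (nbhs M)) A entA.
have h2 : forall N : 'M[T]_(m, n), (forall i j, (M i j, N i j) \in A) -> A (M i j, N i j).
  by move=> N /(_ i j); rewrite inE.
exact: (filterS h2 (h (nbhs_filter M))).
Qed.

Lemma coord_cont (R : realType) (T : topologicalType) n (f : T -> 'rV[R]_n) (i : 'I_n) :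
  continuous f -> continuous (fun t => f t ord0 i).
Proof. by move=> hf t; exact: (continuous_comp (hf t) (@coord_continuous R 1 n ord0 i (f t))). Qed.

Lemma ip_expand (R : realType) n (b : 'rV[R]_n -> 'rV[R]_n -> R) (hb : inner_product b) u v :
  b u v = \sum_i \sum_j (u ord0 i * v ord0 j) * b 'e_i 'e_j.
Proof.
rewrite {1}(row_sum_delta u) (ip_suml hb); apply: eq_bigr => i _.
rewrite (ipZl hb) {1}(row_sum_delta v) (ipC hb) (ip_suml hb) mulr_sumr.
apply: eq_bigr => j _; rewrite (ipZl hb) (ipC hb).
by rewrite mulrA [u _ _ * _]mulrC.
Qed.

Lemma ip_cont (R : realType) n (b : 'rV[R]_n -> 'rV[R]_n -> R) (hb : inner_product b)
  (T : topologicalType) (f g : T -> 'rV[R]_n) :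
  continuous f -> continuous g -> continuous (fun t => b (f t) (g t)).
Proof.
move=> hf hg.
have -> : (fun t => b (f t) (g t)) =
  (fun t => \sum_i \sum_j (f t ord0 i * g t ord0 j) * b 'e_i 'e_j).
  by apply: funext => t; exact: ip_expand.
apply: continuous_big => [|i _]; first exact: add_continuous.
apply: continuous_big => [|j _]; first exact: add_continuous.
move=> t; apply: (@continuousM R T (fun t => f t ord0 i * g t ord0 j) (fun=> b 'e_i 'e_j)).
  apply: (@continuousM R T (fun t => f t ord0 i) (fun t => g t ord0 j)).
    exact: coord_cont.
  exact: coord_cont.
exact: cst_continuous.
Qed.
Lemma box_bound (R : realType) (n : nat) (b : 'rV[R]_n -> 'rV[R]_n -> R)
  (hb : inner_product b) (A : 'rV[R]_n -> Prop)
  (hmax : forall z, exists2 a0, A a0 & forall a, A a -> b a z <= b a0 z) :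
  exists M : 'I_n -> R, forall a, A a -> forall k, `|a ord0 k| <= M k.
Proof.
pose G : 'M[R]_n := \matrix_(i, j) b 'e_i 'e_j.
have hG u j : (u *m G) ord0 j = b u 'e_j.
  rewrite mxE {2}(row_sum_delta u) (ip_suml hb); apply: eq_bigr => i _.
  by rewrite mxE (ipZl hb).
have Gu : G \in unitmx.
  rewrite -row_free_unit; apply: inj_row_free => v hv.
  apply: (ip_eq0 hb); rewrite {2}(row_sum_delta v) (ipC hb) (ip_suml hb) big1 // => j _.
  by rewrite (ipZl hb) (ipC hb) -hG hv mxE mulr0.
have hBj j : exists B, forall a, A a -> `|b a 'e_j| <= B.
  have [a1 _ h1] := hmax 'e_j; have [a2 _ h2] := hmax (- 'e_j).
  exists (`|b a1 'e_j| + `|b a2 (- 'e_j)|) => a ha.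
  have := h1 a ha; have := h2 a ha; rewrite -scaleN1r !(ipZr hb).
  have := ler_norm (b a1 'e_j); have := ler_norm (b a2 'e_j).
  have := normr_ge0 (b a1 'e_j); have := normr_ge0 (b a2 'e_j).
  have := normrN (b a2 'e_j); have := ler_norm (- b a2 'e_j).
  rewrite normrM normrN1 mul1r ler_norml; move=> *; apply/andP; split; lra.
case: (choice hBj) => B hB.
exists (fun k => \sum_j B j * `|invmx G j k|) => a ha k.
have -> : a ord0 k = \sum_j b a 'e_j * invmx G j k.
  rewrite -{1}(mulmxK Gu a) mxE; apply: eq_bigr => j _; by rewrite hG.
apply: (le_trans (ler_norm_sum _ _ _)); apply: ler_sum => j _.
by rewrite normrM ler_wpM2r // hB.
Qed.

Lemma A_closed (R : realType) (n : nat) (b : 'rV[R]_n -> 'rV[R]_n -> R)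
  (hb : inner_product b) (A : 'rV[R]_n -> Prop) (x0 : 'rV[R]_n)
  (hr : forall a, A a -> b a a = b x0 x0)
  (hmax : forall z, exists2 a0, A a0 & forall a, A a -> b a z <= b a0 z) :
  closed A.
Proof.
move=> p hp.
have [a0 ha0 hm] := hmax p.
pose g := fun u => b (u - p) (u - p).
have gc : continuous g.
  have hc : continuous (fun u : 'rV[R]_n => u - p).
    by move=> u; apply: continuousB; [exact: cvg_id | exact: cst_continuous].
  exact: (ip_cont hb hc hc).
have key a : A a -> g a0 <= g a.
  move=> ha; rewrite /g !(ipBl hb) !(ipBr hb) (hr a0 ha0) (hr a ha) (ipC hb p a0) (ipC hb p a).
  have := hm a ha; lra.
have g0 : g a0 = 0.
  apply/le_anti/andP; split; last exact: (ip_ge0 hb).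
  rewrite leNgt; apply/negP => gpos.
  have : nbhs p (g @^-1` [set r | r < g a0]).
    apply: (gc p).
    have -> : g p = 0 by rewrite /g subrr (ip0l hb).
    exact: lt_nbhsl gpos.
  move=> /hp [a [ha /= hga]]; have := key a ha; lra.
have := ip_eq0 hb g0 => /eqP; rewrite subr_eq0 => /eqP <-; exact: ha0.
Qed.

Lemma A_compact (R : realType) (n : nat) (b : 'rV[R]_n -> 'rV[R]_n -> R)
  (hb : inner_product b) (A : 'rV[R]_n -> Prop) (x0 : 'rV[R]_n)
  (hr : forall a, A a -> b a a = b x0 x0)
  (hmax : forall z, exists2 a0, A a0 & forall a, A a -> b a z <= b a0 z) :
  compact A.
Proof.
have [M hM] := box_bound hb hmax.
have hc := @rV_compact R n (fun k => `[- M k, M k]%classic) (fun k => @segment_compact R _ _).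
apply: (subclosed_compact (A_closed hb hr hmax) hc).
move=> a ha k /=; rewrite in_itv /=; rewrite -ler_norml; exact: hM.
Qed.
Lemma W_compact (R : realType) (N : nat) :
  compact ([set w : 'rV[R]_N | forall i, 0 <= w ord0 i] `&`
           [set w : 'rV[R]_N | \sum_i w ord0 i = 1]).
Proof.
have c1 : closed [set w : 'rV[R]_N | forall i, 0 <= w ord0 i].
  have -> : [set w : 'rV[R]_N | forall i, 0 <= w ord0 i] =
    \bigcap_(i in [set: 'I_N]) ((fun w : 'rV[R]_N => w ord0 i) @^-1` [set x | 0 <= x]).
    apply/seteqP; split => w /= h i; [by move=> _; exact: h | exact: (h i I)].
  apply: closed_bigI => i _; apply: preimage_closed; last exact: closed_ge.
  by move=> w _; exact: coord_continuous.
have c2 : closed [set w : 'rV[R]_N | \sum_i w ord0 i = 1].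
  have sc : continuous (fun w : 'rV[R]_N => \sum_i w ord0 i).
    apply: continuous_big => [|i _]; first exact: add_continuous.
    exact: coord_continuous.
  apply: (preimage_closed (f := fun w : 'rV[R]_N => \sum_i w ord0 i) (D := [set x | x = 1])).
    by move=> w _; exact: sc.
  exact: closed_eq.
have hc := @rV_compact R N (fun k => `[0, 1]%classic) (fun k => @segment_compact R _ _).
apply: (subclosed_compact (closedI c1 c2) hc).
move=> w [/= w0 w1] k /=; rewrite in_itv /= w0 /=.
by rewrite -w1 (bigD1 k) //= lerDl sumr_ge0.
Qed.
Lemma real_aux (R : realType) (D be Q : R) : 0 <= Q ->
  (forall t, 0 <= t <= 1 -> D <= D - t * be - (t * be - t * (t * Q))) -> be <= 0.
Proof.
move=> Q0 step.
rewrite leNgt; apply/negP => bpos.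
pose t := be / (be + Q).
have bQ : 0 < be + Q by rewrite ltr_wpDr.
have ht : t * (be + Q) = be by rewrite /t divfK // gt_eqF.
have t0 : 0 < t by rewrite /t divr_gt0.
have t1 : t <= 1 by rewrite /t ler_pdivrMr // mul1r lerDl.
have := step t; rewrite (ltW t0) t1 => /(_ isT) h.
have h2 : t * (t * Q) = t * be - t * (t * be).
  have e : t * (t * Q) = t * (t * (be + Q)) - t * (t * be) by ring.
  by rewrite e ht.
have h3 := mulr_gt0 t0 bpos.
have h4 : 0 <= t * (t * be) by apply: mulr_ge0; [exact: ltW | apply: mulr_ge0; exact: ltW].
clearbody t; nra.
Qed.

Lemma var_aux (R : realType) (V : lmodType R) (ip : V -> V -> R) (hb : inner_product ip)
  (d u : V) :
  (forall t, 0 <= t <= 1 -> ip d d <= ip (d - t *: u) (d - t *: u)) -> ip d u <= 0.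
Proof.
move=> step; apply: (real_aux (D := ip d d) (ip_ge0 hb u)) => t ht.
have := step t ht.
by rewrite !(ipBl hb) !(ipBr hb) !(ipZl hb) !(ipZr hb) (ipC hb u d).
Qed.

Lemma core (R : realType) (n : nat) (b : 'rV[R]_n -> 'rV[R]_n -> R)
  (hb : inner_product b) (A : 'rV[R]_n -> Prop) (x0 : 'rV[R]_n) (Ax0 : A x0)
  (hr : forall a, A a -> b a a = b x0 x0)
  (hmax : forall z, exists2 a0, A a0 & forall a, A a -> b a z <= b a0 z)
  (y : 'rV[R]_n) (hy : forall z, exists2 a, A a & b y z <= b a z) : conv A y.
Proof.
pose W := [set w : 'rV[R]_n.+1 | forall i, 0 <= w ord0 i] `&`
          [set w : 'rV[R]_n.+1 | \sum_i w ord0 i = 1].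
pose P := [set v : 'rV['rV[R]_n]_n.+1 | forall i, A (v ord0 i)].
have Pc : compact P.
  exact: (@rV_compact _ n.+1 (fun=> A) (fun=> A_compact hb hr hmax)).
have Sc : compact (W `*` P) by apply: compact_setX => //; exact: W_compact.
pose comb := fun q : 'rV[R]_n.+1 * 'rV['rV[R]_n]_n.+1 =>
  \sum_i q.1 ord0 i *: q.2 ord0 i.
pose F := fun q => b (y - comb q) (y - comb q).
have Fc : continuous F.
  have cc : continuous (fun q => y - comb q).
    have hcomb : continuous comb.
      apply: continuous_big => [|i _]; first exact: add_continuous.
      move=> q; apply: continuousZ.
        exact: (@coord_cont R _ n.+1 (@fst 'rV[R]_n.+1 'rV['rV[R]_n]_n.+1) i (@fst_cont _ _) q).
      exact: (continuous_comp (@snd_cont 'rV[R]_n.+1 'rV['rV[R]_n]_n.+1 q)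
                (@mxcoord_cont 'rV[R]_n 1 n.+1 ord0 i q.2)).
    move=> q; apply: continuousB; [exact: cst_continuous | exact: hcomb].
  exact: (ip_cont hb cc cc).
have Sne : (W `*` P) !=set0.
  exists (\row_(i < n.+1) (n.+1%:R)^-1, const_mx x0); split => /=.
    split => /= [i|]; first by rewrite mxE invr_ge0 ler0n.
    under eq_bigr do rewrite mxE.
    by rewrite sumr_const card_ord -[X in X *+ _]mulr1 -mulrnAr mulVf // pnatr_eq0.
  by move=> i; rewrite mxE.
have [[ws vs] hS hmin] := compact_EVT_min Sne Sc (continuous_subspaceT Fc).
move: hS; rewrite inE => -[[/= ws0 ws1] /= vsA].
pose p := comb (ws, vs).
have var a : A a -> b (y - p) (a - p) <= 0.
  move=> ha.
  have step t : 0 <= t <= 1 ->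
      b (y - p) (y - p) <= b (y - p - t *: (a - p)) (y - p - t *: (a - p)).
    move=> /andP[t0 t1].
    pose wt (i : 'I_n.+2) := if unlift ord0 i is Some k then (1 - t) * ws ord0 k else t.
    pose pt (i : 'I_n.+2) := if unlift ord0 i is Some k then vs ord0 k else a.
    have wtL k : wt (lift ord0 k) = (1 - t) * ws ord0 k by rewrite /wt liftK.
    have ptL k : pt (lift ord0 k) = vs ord0 k by rewrite /pt liftK.
    have wt0 : wt ord0 = t by rewrite /wt unlift_none.
    have pt0 : pt ord0 = a by rewrite /pt unlift_none.
    have hw0 : forall i, 0 <= wt i.
      move=> i; rewrite /wt; case: unlift => [k|] //.
      by apply: mulr_ge0; [rewrite subr_ge0 | exact: ws0].
    have hw1 : \sum_i wt i = 1.
      rewrite big_ord_recl wt0.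
      have -> : \sum_(i < n.+1) wt (lift ord0 i) = \sum_(i < n.+1) (1 - t) * ws ord0 i.
        by apply: eq_bigr => i _; rewrite wtL.
      by rewrite -mulr_sumr ws1 mulr1 addrC subrK.
    have hpA : forall i, A (pt i).
      by move=> i; rewrite /pt; case: unlift => [k|] //; exact: vsA.
    have [w' [p' [w'0 w'1 hp' e']]] := carath hw0 hw1 hpA.
    have hq : (\row_i w' i, \row_i p' i) \in W `*` P.
      rewrite inE; split; first split => /=.
      + by move=> i; rewrite mxE.
      + by under eq_bigr do rewrite mxE.
      + by move=> i /=; rewrite mxE.
    have := hmin _ hq; rewrite /F.
    have -> : comb (\row_i w' i, \row_i p' i) = t *: a + (1 - t) *: p.
      rewrite /comb /=.
      have -> : \sum_i (\row_i w' i) ord0 i *: (\row_i p' i) ord0 i = \sum_i w' i *: p' i.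
        by apply: eq_bigr => i _; rewrite !mxE.
      rewrite e' big_ord_recl wt0 pt0.
      have -> : \sum_(i < n.+1) wt (lift ord0 i) *: pt (lift ord0 i) =
                \sum_(i < n.+1) (1 - t) *: (ws ord0 i *: vs ord0 i).
        by apply: eq_bigr => i _; rewrite wtL ptL scalerA.
      by rewrite -scaler_sumr.
    have -> : y - (t *: a + (1 - t) *: p) = y - p - t *: (a - p).
      by rewrite scalerBl scale1r scalerBr !opprD !opprK !addrA [y - t *: a - p]addrAC.
    by [].
  exact: (var_aux hb step).
have [a ha hle] := hy (y - p).
have := var a ha; rewrite (ipBr hb) (ipC hb (y - p) a) (ipC hb (y - p) p) => h.
have : b (y - p) (y - p) <= 0 by rewrite (ipBl hb); lra.
move=> h0; have : b (y - p) (y - p) = 0 by apply/le_anti; rewrite h0 (ip_ge0 hb).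
move/(ip_eq0 hb)/eqP; rewrite subr_eq0 => /eqP ->.
exists n.+1, (fun i => ws ord0 i), (fun i => vs ord0 i); split => //.
Qed.
Theorem proposition3p8
  (R : realType)
  (H : vectType R) (ipH : H -> H -> R)
  (X : vectType R) (ipX : X -> X -> R)
  (G : Type) (mul : G -> G -> G) (inv : G -> G) (e : G)
  (act : G -> X -> X)
  (gamma : H -> X) (Aidx : Type) (Lambda : Aidx -> X -> H)
  (tau : X -> X)
  (hipH : inner_product ipH) (hipX : inner_product ipX)
  (hG : is_group mul inv e)
  (hact : isometric_action mul e ipX act)
  (hsds : spectral_decomposition_system_with ipH ipX act gamma Lambda tau)
  (x y : X) :
  (conv (orbitS act x) y <-> (forall z : X, ipX y z <= ipX (tau x) (tau z)))
  /\
  (in_range gamma x -> in_range gamma y ->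
     (conv (orbitS act x) y <->
        (forall z : X, in_range gamma z -> ipX (y - x) z <= 0))
     /\
     ((forall z : X, ipX y z <= ipX (tau x) (tau z)) <->
        (forall z : X, in_range gamma z -> ipX (y - x) z <= 0))).
Proof.
move: hsds => [hA [hinv horb hgl] hC hD].
move: hact => [hae hmul hiso].
move: hG => [hassoc hid hinvg].
have ipiso g u v : ipX (act g u) (act g v) = ipX u v.
  exact: (lin_iso_ip hipX hipX (hiso g)).
have key u z : ipX u z <= ipX (tau u) (tau z).
  have [a _] := hC 0.
  by rewrite -(lin_iso_ip hipX hipH (hA a) u z) -!(hgl a); exact: hD.
have orbmax z : exists2 a0, orbitS act x a0 & ipX (tau x) (tau z) = ipX a0 z.
  have [g hg] := horb x; have [g' hg'] := horb z.
  exists (act (mul (inv g') g) x); first by exists (mul (inv g') g).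
  rewrite hg hg' -[RHS](ipiso g') -hmul hassoc (proj2 (hinvg g')).
  by rewrite (proj1 (hid g)).
have orbub a z : orbitS act x a -> ipX a z <= ipX (tau x) (tau z).
  by move=> [g ->]; rewrite -(hinv g x); exact: key.
have fixg Z : tau (gamma Z) = gamma Z.
  by have [a ha] := hC Z; rewrite {2}ha hgl.
have rangetau z : in_range gamma (tau z).
  by have [a _] := hC 0; exists (Lambda a z); rewrite hgl.
have part1 : conv (orbitS act x) y <-> (forall z : X, ipX y z <= ipX (tau x) (tau z)).
  split.
    move=> [N [w [p [w0 w1 hp ->]]]] z.
    rewrite (ip_suml hipX).
    apply: (@le_trans _ _ (\sum_(i < N) w i * ipX (tau x) (tau z))).
      apply: ler_sum => i _; rewrite (ipZl hipX).
      by apply: ler_wpM2l => //; exact: orbub.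
    by rewrite -mulr_suml w1 mul1r.
  move=> hii.
  pose b := fun u v : 'rV[R]_(dim X) => ipX (r2v u) (r2v v).
  have hb : inner_product b.
    split => [u v|a u v w|u|u].
    - exact: (ipC hipX).
    - by rewrite /b linearD linearZ /= (ipDl hipX) (ipZl hipX).
    - exact: (ip_ge0 hipX).
    - move/(ip_eq0 hipX) => h0.
      by rewrite -(r2vK u) h0 linear0.
  have := @core R (dim X) b hb (fun v => orbitS act x (r2v v)) (v2r x).
  rewrite /b v2rK => /(_ _ _ _ (v2r y)); rewrite v2rK.
  case.
  - by exists e; rewrite hae.
  - by move=> a [g ->]; rewrite ipiso.
  - move=> z; have [a0 ha0 e0] := orbmax (r2v z).
    exists (v2r a0); rewrite ?v2rK // => a /orbub; rewrite -e0; exact.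
  - move=> z; have [a0 ha0 e0] := orbmax (r2v z).
    by exists (v2r a0); rewrite ?v2rK // -e0.
  - move=> N [w [p [w0 w1 hp hy]]].
    exists N, w, (fun i => r2v (p i)); split => //.
    by rewrite -(v2rK y) hy linear_sum; apply: eq_bigr => i _; rewrite linearZ.
split => //.
move=> [X0 hx0] [Y0 hy0].
have tx : tau x = x by rewrite hx0 fixg.
have ty : tau y = y by rewrite hy0 fixg.
have p23 : (forall z : X, ipX y z <= ipX (tau x) (tau z)) <->
        (forall z : X, in_range gamma z -> ipX (y - x) z <= 0).
  split.
    move=> h z [Z ->]; rewrite (ipBl hipX) subr_le0.
    by have := h (gamma Z); rewrite tx fixg.
  move=> h z; apply: (le_trans (key y z)); rewrite ty tx.
  by have := h _ (rangetau z); rewrite (ipBl hipX) subr_le0.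
split => //; split.
  by move=> h; apply p23; apply part1.
by move=> h; apply part1; apply p23.
Qed.
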